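(* Let $k$ be a positive integer. Then there exists a polynomial map $f:\mathbb{C}^2\to\mathbb{C}^2$ with $\mu_f=k+1$ such that $\mathbb{C}^2\setminus f(\mathbb{C}^2)$ has at least one isolated point.
   Context: For a dominant polynomial map $f$ (i.e. $f(\mathbb{C}^2)$ dense in $\mathbb{C}^2$), $\mu_f$ is the number of preimages of a generic point of $\mathbb{C}^2$. *)

(* Defs.v *)
From HB Require Import structures.
From mathcomp Require Import all_boot all_order all_algebra.
From mathcomp Require Import reals complex.
Set Implicit Arguments. Unset Strict Implicit. Unset Printing Implicit Defensive.
Import Order.TTheory GRing.Theory Num.Theory.
Local Open Scope ring_scope.

(* A bivariate polynomial over C is an element of {poly {poly C}};
   its value at (x, y) is obtained by substituting y for the outer
   variable and x for the inner one. *)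
Definition eval2 {C : nzRingType} (p : {poly {poly C}}) (z : C * C) : C :=
  (p.[z.2%:P]).[z.1].

Definition polymap {C : nzRingType} (P Q : {poly {poly C}}) (z : C * C) : C * C :=
  (eval2 P z, eval2 Q z).

(* Dominant: the image is (Zariski) dense, i.e. the only polynomial
   vanishing on the image is the zero polynomial. *)
Definition dominant {C : nzRingType} (f : C * C -> C * C) : Prop :=
  forall g : {poly {poly C}}, (forall z, eval2 g (f z) = 0) -> g = 0.

Definition fiber_card {C : eqType} (f : C * C -> C * C) (w : C * C) (n : nat) : Prop :=
  exists s : seq (C * C), [/\ uniq s, size s = n & forall z, f z = w <-> z \in s].

(* mu_f = n: a generic point (i.e. every point outside the zero set of some
   nonzero polynomial, a proper Zariski-closed subset) has exactly n preimages. *)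
Definition generic_degree {C : nzRingType} (f : C * C -> C * C) (n : nat) : Prop :=
  exists g : {poly {poly C}}, g != 0 /\
    forall w, eval2 g w != 0 -> fiber_card f w n.

(* w is an isolated point of the set S in C^2 (C with its Euclidean
   topology, product topology on C^2 given by the max of the moduli). *)
Definition isolated_point {C : numDomainType} (S : C * C -> Prop) (w : C * C) : Prop :=
  S w /\ exists e : C, 0 < e /\
    forall z, S z -> `|z.1 - w.1| < e -> `|z.2 - w.2| < e -> z = w.

(* Main.v *)
Require Import Defs.
From HB Require Import structures.
From mathcomp Require Import all_boot all_order all_algebra all_field.
From mathcomp Require Import reals complex.
From mathcomp Require Import ring.
Import Order.TTheory GRing.Theory Num.Theory.
Local Open Scope ring_scope.

Section Aux.
Variable C : numClosedFieldType.

Lemma poly_zero_nz (p : {poly C}) : (forall a, a != 0 -> p.[a] = 0) -> p = 0.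
Proof.
move=> H; apply/eqP; apply/negPn/negP => pn0.
have : (size [seq (i.+1)%:R : C | i <- iota 0 (size p)] < size p)%N.
  apply: max_poly_roots pn0 _ _.
- apply/allP => x /mapP [i _ ->]; apply/eqP/H; by rewrite pnatr_eq0.
- rewrite map_inj_uniq ?iota_uniq // => i j /eqP; rewrite eqr_nat eqSS => /eqP; apply.
by rewrite size_map size_iota ltnn.
Qed.
Lemma poly2_zero (g : {poly {poly C}}) :
  (forall a b, a != 0 -> eval2 g (a, b) = 0) -> g = 0.
Proof.
move=> H; apply/polyP => i; rewrite coef0.
apply: poly_zero_nz => a an0.
have E : map_poly (horner_eval a) g = 0.
  apply: poly_zero_nz => b _.
  have := H a b an0; rewrite /eval2 /= => <-.
  have := horner_map (horner_eval a) g b%:P; rewrite /= /horner_eval hornerC => ->.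
  done.
have := congr1 (fun q : {poly C} => q`_i) E.
by rewrite coef_map /= coef0.
Qed.

Variable n : nat.
Hypothesis hn : (0 < n)%N.

Definition Pf : {poly {poly C}} := 'X%:P * 'X - 1.
Definition Qf : {poly {poly C}} := 'X%:P + ('X%:P * 'X - 1) * 'X^n.

Lemma evalf x y : polymap Pf Qf (x, y) = (x * y - 1, x + (x * y - 1) * y ^+ n).
Proof. by rewrite /polymap /eval2 /Pf /Qf /= !hornerE. Qed.

Definition Pu (a b : C) : {poly C} := 'X^(n.+1) + ((a * (a + 1) ^+ n)%:P - b *: 'X^n).

Lemma Pu_root a b r :
  root (Pu a b) r = (r ^+ n.+1 + (a * (a + 1) ^+ n - b * r ^+ n) == 0).
Proof. by rewrite /root /Pu !hornerE. Qed.

Lemma size_Pu_aux (a b : C) : (size ((a * (a + 1) ^+ n)%:P - b *: 'X^n)%R < size ('X^(n.+1) : {poly C}))%N.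
Proof.
rewrite size_polyXn ltnS (leq_trans (size_polyD _ _)) // geq_max.
rewrite (leq_trans (size_polyC_leq1 _)) //= size_polyN.
by rewrite (leq_trans (size_scale_leq _ _)) // size_polyXn.
Qed.

Lemma size_Pu a b : size (Pu a b) = n.+2.
Proof. by rewrite /Pu size_polyDl ?size_Pu_aux // size_polyXn. Qed.

Lemma lead_Pu a b : lead_coef (Pu a b) = 1.
Proof. by rewrite /Pu lead_coefDl ?size_Pu_aux // lead_coefXn. Qed.

Lemma surj a b : (a, b) != (0, 0) -> exists u, polymap Pf Qf u = (a, b).
Proof.
move=> nz.
have [a0|an0] := eqVneq a 0.
  subst a; have bn0 : b != 0 by apply: contraNneq nz => ->.
  exists (b, b^-1); rewrite evalf divff //; congr (_, _); ring.
have [a1|a1n] := eqVneq a (-1).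
  exists (b, 0); rewrite evalf a1 expr0n eqn0Ngt hn /=; congr (_, _); ring.
have a1n0 : a + 1 != 0 by rewrite addr_eq0.
have dn0 : a * (a + 1) ^+ n != 0 by rewrite mulf_neq0 // expf_neq0.
have [r hr] : exists r, root (Pu a b) r by apply/closed_rootP; rewrite size_Pu.
move: hr; rewrite Pu_root => /eqP hr.
have rn0 : r != 0.
  apply: contra_eq_neq hr => ->; rewrite !expr0n /= eqn0Ngt hn /=.
  by rewrite mulr0 subr0 add0r.
exists (r, (a + 1) / r); rewrite evalf mulrC divfK //; congr (_, _); first ring.
apply: (mulIf (expf_neq0 n rn0)).
have E : ((a + 1) / r) ^+ n * r ^+ n = (a + 1) ^+ n by rewrite -exprMn divfK.
rewrite mulrDl -mulrA E; apply/eqP; rewrite -subr_eq0; apply/eqP.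
rewrite -hr exprS; ring.
Qed.

Lemma good_root a b r : a * (a + 1) ^+ n != 0 -> root (Pu a b) r ->
  r != 0 /\ polymap Pf Qf (r, (a + 1) / r) = (a, b).
Proof.
move=> dn0; rewrite Pu_root => /eqP hr.
have rn0 : r != 0.
  apply: contra_eq_neq hr => ->; rewrite !expr0n /= eqn0Ngt hn /=.
  by rewrite mulr0 subr0 add0r.
have a1n0 : a + 1 != 0 by apply: contraNneq dn0 => ->; rewrite expr0n eqn0Ngt hn mulr0.
split => //.
rewrite evalf mulrC divfK //; congr (_, _); first ring.
apply: (mulIf (expf_neq0 n rn0)).
have E : ((a + 1) / r) ^+ n * r ^+ n = (a + 1) ^+ n by rewrite -exprMn divfK.
rewrite mulrDl -mulrA E; apply/eqP; rewrite -subr_eq0; apply/eqP.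
rewrite -hr exprS; ring.
Qed.

Definition G : {poly {poly C}} :=
  'X%:P * ('X%:P + 1) ^+ n *
  (((n.+1)%:R ^+ n.+1 : C)%:P%:P * ('X%:P * ('X%:P + 1) ^+ n) - (n%:R ^+ n : C)%:P%:P * 'X ^+ n.+1).

Lemma evalG a b : eval2 G (a, b) =
  a * (a + 1) ^+ n * ((n.+1)%:R ^+ n.+1 * (a * (a + 1) ^+ n) - n%:R ^+ n * b ^+ n.+1).
Proof. by rewrite /eval2 /G /= !hornerE. Qed.

Lemma G_neq0 : G != 0.
Proof.
apply/eqP => G0; have := evalG 1 0; rewrite G0 /eval2 !hornerE.
rewrite expr0n /= mulr0 subr0 => /esym/eqP.
have h2 : (1 + 1 : C) != 0 by have := pnatr_eq0 C 2; rewrite /= => ->.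
by rewrite !mulf_eq0 !expf_eq0 pnatr_eq0 (negbTE h2) /= !andbF.
Qed.

Lemma fiber a b : eval2 G (a, b) != 0 -> fiber_card (polymap Pf Qf) (a, b) n.+1.
Proof.
rewrite evalG mulf_eq0 negb_or => /andP [dn0 Kn0].
have [rs hrs] := closed_field_poly_normal (Pu a b).
rewrite lead_Pu scale1r in hrs.
have srs : size rs = n.+1 by have := size_Pu a b; rewrite hrs size_prod_XsubC => -[].
have urs : uniq rs.
  rewrite -separable_prod_XsubC -hrs unlock /separable_poly coprimep_def.
  apply/negPn/negP => /closed_rootP [r]; rewrite root_gcd => /andP [h1 h2].
  have [rn0 _] := good_root a b r dn0 h1.
  move: h2; rewrite /root /Pu derivD derivB derivZ derivC !derivXn.
  rewrite !hornerE !hornerMn !hornerE => /eqP h2.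
  have {}h2 : r ^+ n *+ n.+1 + 0 - b * (r ^+ n.-1 *+ n) = 0 := h2.
  move: h1; rewrite Pu_root => /eqP h1.
  have Er : r ^+ n = r * r ^+ n.-1 by rewrite -exprS prednK.
  have h3 : r ^+ n.-1 * ((n.+1)%:R * r - n%:R * b) = 0.
    by rewrite -h2 Er; ring.
  move: h3 => /eqP; rewrite mulf_eq0 expf_eq0 (negbTE rn0) andbF /= subr_eq0 => /eqP h3.
  have dE : a * (a + 1) ^+ n = b * r ^+ n - r ^+ n.+1.
    by apply/eqP; rewrite -subr_eq0; apply/eqP; rewrite -h1; ring.
  move/eqP: Kn0; apply.
  rewrite dE.
  have -> : (n.+1)%:R ^+ n.+1 * (b * r ^+ n - r ^+ n.+1) =
     ((n.+1)%:R * r) ^+ n * ((n.+1)%:R * b - (n.+1)%:R * r) :> C.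
    by rewrite exprMn !exprS; ring.
  by rewrite h3 exprMn exprS; ring.
exists [seq (r, (a + 1) / r) | r <- rs]; split.
- apply: (@map_uniq _ _ fst); rewrite -map_comp.
  by rewrite (@eq_map _ _ _ id) ?map_id.
- by rewrite size_map.
- move=> [x y]; rewrite evalf; split.
  + case=> e1 e2.
    have exy : x * y = a + 1 by rewrite -e1; ring.
    have a1n0 : a + 1 != 0 by apply: contraNneq dn0 => ->; rewrite expr0n eqn0Ngt hn mulr0.
    have xn0 : x != 0 by apply: contraNneq a1n0 => x0; rewrite -exy x0 mul0r.
    have ey : y = (a + 1) / x by rewrite -exy [x * y]mulrC mulfK.
    apply/mapP; exists x; last by rewrite ey.
    rewrite -root_prod_XsubC -hrs Pu_root -e2 -[in a + 1]exy.
    apply/eqP; rewrite e1 exprMn !exprS; ring.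
  + move/mapP => [r rin [-> ->]].
    have hr : root (Pu a b) r by rewrite hrs root_prod_XsubC.
    by have [_ <-] := good_root a b r dn0 hr; rewrite evalf.
Qed.

End Aux.

Theorem lemma2p7 (R : realType) (k : nat) (hk : (0 < k)%N) :
  exists P Q : {poly {poly R[i]}},
    dominant (polymap P Q) /\
    generic_degree (polymap P Q) k.+1 /\
    exists w : R[i] * R[i],
      isolated_point (fun z => ~ exists u, polymap P Q u = z) w.
Proof.
exists (Pf R[i]), (Qf R[i] k); split; [|split].
- move=> g H; apply: poly2_zero => a b an0.
  have nz : (a, b) != (0, 0) by apply: contraNneq an0 => -[->].
  have [u hu] := @surj _ k hk a b nz.
  by rewrite -hu H.
- exists (G R[i] k); split; first exact: G_neq0.
  by move=> [a b]; apply: (@fiber _ k hk a b).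
- exists (0, 0); split.
    move=> [[x y]]; rewrite evalf => -[e1 e2].
    rewrite e1 mul0r addr0 in e2; rewrite e2 mul0r sub0r in e1.
    by move/eqP: e1; rewrite oppr_eq0 oner_eq0.
  exists 1; split => // -[a b] hnot _ _.
  apply/eqP; apply/negPn/negP => nz; apply: hnot; exact: (@surj _ k hk a b nz).
Qed.
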